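(* Let $(t_n(x))_{n\ge0}$ be the generalized Gončarov basis associated with $(\mathfrak d,\mathcal Z)$, $\mathcal Z=(z_i)_{i\ge0}$, and let $(p_n(x))_{n\ge0}$ be the basic sequence of $\mathfrak d$. Then for $n\ge1$, $$t_n(0)=\sum_{\rho\in\mathcal R[n]}(-1)^{|\rho|}\prod_{i=0}^{|\rho|-1}p_{b_{i+1}}(z_{s_i})=\sum_{\rho\in\mathcal R[n]}(-1)^{|\rho|}p_{b_1}(z_0)\,p_{b_2}(z_{s_1})\cdots p_{b_k}(z_{s_{k-1}}),$$ where for $\rho=(B_1,\dots,B_k)$ we write $k=|\rho|$, $b_i=|B_i|$, and $s_i=b_1+\cdots+b_i$ (with $s_0=0$).
   Context: $\mathbb K$ is a field of characteristic zero; a delta operator is a linear operator $\mathfrak d$ on $\mathbb K[x]$ commuting with all shifts $E_a:f(x)\mapsto f(x+a)$ and with $\mathfrak d(x)$ a nonzero constant; its basic sequence is the unique $(p_n)$ with $\deg p_n=n$, $p_0=1$, $p_n(0)=0$ ($n\ge1$), $\mathfrak dp_n=np_{n-1}$. $\varepsilon_z$ is evaluation at $z$. The generalized Gončarov basis associated with $(\mathfrak d,\mathcal Z)$ is the unique sequence $(t_n)_{n\ge0}$ with $\deg t_n=n$ and $\varepsilon_{z_i}(\mathfrak d^{\,i}(t_n))=n!\,\delta_{i,n}$ for all $i,n$. $\mathcal R[n]$ is the set of ordered partitions of $[n]=\{1,\dots,n\}$, i.e. ordered lists $(B_1,\dots,B_k)$ of pairwise disjoint nonempty subsets with union $[n]$.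 *)

(* Defs.v *)
From HB Require Import structures.
From mathcomp Require Import all_boot all_order all_algebra.
Set Implicit Arguments. Unset Strict Implicit. Unset Printing Implicit Defensive.
Import Order.TTheory GRing.Theory Num.Theory.
Local Open Scope ring_scope.

Definition shiftp (K : fieldType) (a : K) (f : {poly K}) : {poly K} :=
  f \Po ('X + a%:P).

Definition is_delta (K : fieldType) (d : {linear {poly K} -> {poly K}}) : Prop :=
  (forall (a : K) (f : {poly K}), d (shiftp a f) = shiftp a (d f)) /\
  (exists c : K, c != 0 /\ d 'X = c%:P).

Definition is_basic_seq (K : fieldType) (d : {linear {poly K} -> {poly K}})
  (p : nat -> {poly K}) : Prop :=
  (forall n, size (p n) = n.+1) /\
  p 0%N = 1 /\
  (forall n, (0 < n)%N -> (p n).[0] = 0) /\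
  (forall n, (0 < n)%N -> d (p n) = n%:R *: p n.-1).

Definition is_goncarov_basis (K : fieldType) (d : {linear {poly K} -> {poly K}})
  (z : nat -> K) (t : nat -> {poly K}) : Prop :=
  (forall n, size (t n) = n.+1) /\
  (forall i n, (iter i d (t n)).[z i] = if i == n then (n`!)%:R else 0).

Definition is_ordpart (n k : nat) (B : {ffun 'I_k -> {set 'I_n}}) : bool :=
  [&& [forall i, B i != set0],
      [forall i, forall j, (i != j) ==> [disjoint B i & B j]]
    & (\bigcup_(i < k) B i == [set: 'I_n])].

(* s_i = b_1 + ... + b_i (0-indexed blocks: sum of sizes of blocks before i) *)
Definition psum (n k : nat) (B : {ffun 'I_k -> {set 'I_n}}) (i : 'I_k) : nat :=
  (\sum_(j < k | (j < i)%N) #|B j|)%N.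

(* Main.v *)
Require Import Defs.
From HB Require Import structures.
From mathcomp Require Import all_boot all_order all_algebra.
Import Order.TTheory GRing.Theory Num.Theory.
Local Open Scope ring_scope.

Section Alg.
Variables (K : fieldType) (hK : [pchar K] =i pred0)
  (d : {linear {poly K} -> {poly K}})
  (p : nat -> {poly K}) (hp : is_basic_seq d p)
  (z : nat -> K) (t : nat -> {poly K}) (ht : is_goncarov_basis d z t).

Lemma iter_sumZ (I : Type) (r : seq I) (a : I -> K) (q : I -> {poly K}) j :
  iter j d (\sum_(i <- r) a i *: q i) = \sum_(i <- r) a i *: iter j d (q i).
Proof.
elim: j => [|j IH] //=; rewrite IH linear_sum; apply: eq_bigr => i _.
by rewrite linearZ.
Qed.

Lemma fact_neq0 i : (i`!)%:R != 0 :> K.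
Proof. by move/(pcharf0P K): hK => ->; rewrite -lt0n fact_gt0. Qed.

Lemma span_ex m (q : {poly K}) : (size q <= m)%N -> exists a : nat -> K, q = \sum_(i < m) a i *: t i.
Proof.
elim: m q => [|m IH] q hq.
  by exists (fun=> 0); rewrite big_ord0; move: hq; rewrite leqn0 size_poly_eq0 => /eqP.
have [ts _] := ht.
have lc0 : (t m)`_m != 0.
  by have := lead_coef_eq0 (t m); rewrite lead_coefE ts /= => ->; rewrite -size_poly_eq0 ts.
set c := q`_m / (t m)`_m.
have hq' : (size (q - c *: t m)%R <= m)%N.
  apply/leq_sizeP => j hj; rewrite coefB coefZ.
  rewrite leq_eqVlt in hj; case/orP: hj => [/eqP <-|hjm]; first by rewrite /c divfK // subrr.
  rewrite (nth_default _ (leq_trans hq hjm)) (nth_default _ (_ : size (t m) <= j)%N).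
    by rewrite mulr0 subrr.
  by rewrite ts.
have [a ha] := IH _ hq'.
exists (fun i => if i == m then c else a i).
rewrite big_ord_recr /= eqxx -[q](subrK (c *: t m)) ha; congr (_ + _).
by apply: eq_bigr => i _; rewrite ltn_eqF.
Qed.

Lemma span m (q : {poly K}) : (size q <= m)%N ->
  q = \sum_(i < m) ((iter i d q).[z i] / (i`!)%:R) *: t i.
Proof.
move=> hq; have [a ha] := span_ex _ _ hq.
have [_ tz] := ht.
rewrite {1}ha; apply: eq_bigr => i _; congr (_ *: _).
rewrite ha iter_sumZ horner_sum (bigD1 i) //= hornerZ tz eqxx big1 ?addr0.
  by rewrite mulfK // fact_neq0.
move=> j hj; rewrite hornerZ tz.
by case: eqP => [/val_inj e|_]; [rewrite e eqxx in hj|rewrite mulr0].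
Qed.

Lemma iter_p n i : (i <= n)%N -> iter i d (p n) = (n ^_ i)%:R *: p (n - i).
Proof.
have [_ [_ [_ dp]]] := hp.
elim: i => [|i IH] hi /=; first by rewrite scale1r subn0.
rewrite IH ?(ltnW hi) // linearZ /= dp ?subn_gt0 // scalerA -natrM -ffactnSr.
by rewrite -subnS.
Qed.

Lemma t_rec n : (1 <= n)%N ->
  (t n).[0] = - \sum_(i < n) 'C(n, i)%:R * (p (n - i)).[z i] * (t i).[0].
Proof.
move=> hn; have [ps [p0 [pz _]]] := hp.
have h1 : (p 0).[z n] = 1 by rewrite p0 hornerE.
have := span _ _ (leqnn (size (p n))); rewrite ps => e.
have : (p n).[0] = 0 by rewrite pz.
rewrite {1}e horner_sum big_ord_recr /= hornerZ iter_p // subnn hornerZ h1 mulr1.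
rewrite ffactnn mulfV ?fact_neq0 // mul1r => /eqP; rewrite addrC addr_eq0 => /eqP ->.
congr (- _); apply: eq_bigr => i _; rewrite hornerZ iter_p ?(ltnW (ltn_ord i)) //.
rewrite -bin_ffact natrM hornerZ; congr (_ * _); by rewrite mulrAC mulfK ?fact_neq0.
Qed.

Lemma t0 : (t 0).[0] = 1.
Proof.
have [ts tz] := ht.
have /size_poly1P [c _ ec] : size (t 0) == 1%N by rewrite ts.
have := tz 0%N 0%N; rewrite /= ec !hornerC => ->; by [].
Qed.
End Alg.

Set Implicit Arguments. Unset Strict Implicit. Unset Printing Implicit Defensive.
From mathcomp Require Import zify.
Section Comb.
Variables (K : fieldType) (T : finType) (f : nat -> nat -> K).

Definition opart k (A : {set T}) (B : {ffun 'I_k -> {set T}}) : bool :=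
  [&& [forall i, B i != set0],
      [forall i, forall j, (i != j) ==> [disjoint B i & B j]]
    & (\bigcup_(i < k) B i == A)].

Definition psumT k (B : {ffun 'I_k -> {set T}}) (i : 'I_k) : nat :=
  (\sum_(j < k | (j < i)%N) #|B j|)%N.

Definition W k (A : {set T}) : K :=
  \sum_(B : {ffun 'I_k -> {set T}} | opart A B)
     (-1) ^+ k * \prod_(i < k) f #|B i| (psumT B i).

Lemma card_cup k (B : 'I_k -> {set T}) :
  (forall i j, i != j -> [disjoint B i & B j]) ->
  #|\bigcup_(i < k) B i| = (\sum_(i < k) #|B i|)%N.
Proof.
move=> H; rewrite -sum1_card (partition_disjoint_bigcup _ _ H).
by apply: eq_bigr => i _; rewrite sum1_card.
Qed.

Lemma opart_disj k A (B : {ffun 'I_k -> {set T}}) : opart A B ->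
  forall i j, i != j -> [disjoint B i & B j].
Proof. by case/and3P => _ /forallP H _ i j; move: (H i) => /forallP /(_ j) /implyP. Qed.

Lemma opart_card k A (B : {ffun 'I_k -> {set T}}) : opart A B ->
  #|A| = (\sum_(i < k) #|B i|)%N.
Proof.
move=> hB; have := opart_disj hB; move: hB => /and3P [_ _ /eqP <-].
exact: card_cup.
Qed.

Lemma opart_le k A (B : {ffun 'I_k -> {set T}}) : opart A B -> (k <= #|A|)%N.
Proof.
move=> hB; rewrite (opart_card hB); have /and3P [/forallP hn _ _] := hB.
rewrite -[k in (k <= _)%N]card_ord -sum1_card; apply: leq_sum => i _.
by rewrite card_gt0.
Qed.

Lemma W_big k (A : {set T}) : (#|A| < k)%N -> W k A = 0.
Proof.
move=> hk; apply: big1 => B hB; have := opart_le hB.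
by rewrite leqNgt hk.
Qed.

Section Dec.
Variable k : nat.
Definition hh (x : {set T} * {ffun 'I_k -> {set T}}) : {ffun 'I_k.+1 -> {set T}} :=
  [ffun i => if unlift ord_max i is Some j then x.2 j else x.1].
Definition hinv (B : {ffun 'I_k.+1 -> {set T}}) : {set T} * {ffun 'I_k -> {set T}} :=
  (B ord_max, [ffun j => B (lift ord_max j)]).

Lemma hh_lift x j : hh x (lift ord_max j) = x.2 j.
Proof. by rewrite ffunE liftK. Qed.
Lemma hh_max x : hh x ord_max = x.1.
Proof. by rewrite ffunE unlift_none. Qed.

Lemma hh_bij : bijective hh.
Proof.
exists hinv.
  by case=> C B; rewrite /hinv hh_max; congr (_, _); apply/ffunP => j; rewrite ffunE hh_lift.
move=> B; apply/ffunP => i; rewrite /hinv ffunE.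
by case: unliftP => [j ->|->] //; rewrite ffunE.
Qed.

Lemma widen_lift (i : 'I_k) : widen_ord (leqnSn k) i = lift ord_max i.
Proof. by apply/val_inj; rewrite [RHS]lift_max. Qed.

Lemma psum_hh_lift x i : psumT (hh x) (lift ord_max i) = psumT x.2 i.
Proof.
have e : bump k i = i by rewrite /bump leqNgt ltn_ord.
rewrite /psumT big_mkcond big_ord_recr /= e ltnNge ltnW //= addn0.
rewrite [RHS]big_mkcond; apply: eq_bigr => j _; by rewrite widen_lift hh_lift.
Qed.

Lemma psum_hh_max x : psumT (hh x) ord_max = (\sum_(j < k) #|x.2 j|)%N.
Proof.
rewrite /psumT big_mkcond big_ord_recr /= ltnn addn0.
by apply: eq_bigr => j _; rewrite widen_lift /= ltn_ord hh_lift.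
Qed.

Lemma forall_ordS (P : pred 'I_k.+1) :
  [forall i, P i] = P ord_max && [forall j : 'I_k, P (lift ord_max j)].
Proof.
apply/forallP/andP => [H|[H1 /forallP H2] i]; first by split => //; apply/forallP.
by case: (unliftP ord_max i) => [j ->|->].
Qed.

Lemma cup_hh x : \bigcup_(i < k.+1) hh x i = x.1 :|: \bigcup_(j < k) x.2 j.
Proof.
rewrite big_ord_recr /= hh_max setUC; congr (_ :|: _).
by apply: eq_bigr => j _; rewrite widen_lift hh_lift.
Qed.

Lemma disj_hh x :
  [forall i, forall j, (i != j) ==> [disjoint hh x i & hh x j]] =
  [disjoint x.1 & \bigcup_(j < k) x.2 j] &&
  [forall i, forall j, (i != j) ==> [disjoint x.2 i & x.2 j]].
Proof.
apply/idP/idP.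
  move/forallP => H; apply/andP; split.
    apply/bigcup_disjointP => j _; have /forallP /(_ (lift ord_max j)) := H ord_max.
    by rewrite neq_lift hh_max hh_lift.
  apply/forallP => i; apply/forallP => j; apply/implyP => ij.
  have /forallP /(_ (lift ord_max j)) := H (lift ord_max i).
  by rewrite (inj_eq (@lift_inj _ ord_max)) ij !hh_lift.
case/andP => [/bigcup_disjointP Hc /forallP H].
apply/forallP => i; apply/forallP => j; apply/implyP.
case: (unliftP ord_max i) => [i' ->|->]; case: (unliftP ord_max j) => [j' ->|->];
  rewrite ?hh_lift ?hh_max ?eqxx //.
- by rewrite (inj_eq (@lift_inj _ ord_max)) => ij; move: (H i') => /forallP /(_ j') /implyP; apply.
- by move=> _; rewrite disjoint_sym; apply: Hc.
- by move=> _; apply: Hc.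
Qed.


Lemma opart_hh (A : {set T}) x : opart A (hh x) =
  [&& x.1 \subset A, x.1 != set0 & opart (A :\: x.1) x.2].
Proof.
rewrite /opart forall_ordS hh_max disj_hh cup_hh.
have -> : [forall j, hh x (lift ord_max j) != set0] = [forall j, x.2 j != set0].
  by apply: eq_forallb => j; rewrite hh_lift.
case: x => C B /=; set U := \bigcup_(j < k) B j.
apply/idP/idP.
  case/and3P => /andP [-> ->] /andP [hd ->] /eqP hA /=.
  rewrite -hA subsetUl /= setDUl setDv set0U.
  by rewrite disjoint_sym in hd; move/setDidPl: hd => ->.
case/and5P => hC -> -> -> /eqP hU /=.
rewrite hU disjoint_sym disjoints_subset subsetDr /=.
by rewrite -{2}(setID A C) (setIidPr hC).
Qed.
End Dec.

Lemma W_S k (A : {set T}) : W k.+1 A =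
  - \sum_(C : {set T} | (C \subset A) && (C != set0))
       f #|C| #|A :\: C| * W k (A :\: C).
Proof.
rewrite /W (reindex (@hh k)); last exact: onW_bij (hh_bij k).
rewrite -sumrN; under [in RHS]eq_bigr => C _ do rewrite mulr_sumr -sumrN.
rewrite pair_big_dep; apply: eq_big => [x|x]; first by rewrite opart_hh andbA.
rewrite opart_hh => /and3P [hC _ hB].
rewrite big_ord_recr /= hh_max psum_hh_max -(opart_card hB).
rewrite exprS mulN1r mulNr; congr (- _).
rewrite mulrA mulrC; congr (_ * (_ * _)).
by apply: eq_bigr => i _; rewrite widen_lift hh_lift psum_hh_lift.
Qed.


Lemma W0 (A : {set T}) : W 0 A = (A == set0)%:R.
Proof.
rewrite /W; have e (B : {ffun 'I_0 -> {set T}}) : opart A B = (set0 == A).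
  rewrite /opart big_ord0; apply/and3P/idP => [[_ _ //]|->]; split => //;
  by apply/forallP => -[].
under eq_bigl => B do rewrite e.
under eq_bigr => B _ do rewrite expr0 big_ord0 mulr1.
rewrite eq_sym; case: eqP => _; last by rewrite big_pred0.
set B0 : {ffun 'I_0 -> {set T}} := [ffun i => set0].
rewrite (big_pred1 B0) // => B /=; symmetry; by apply/eqP/ffunP => -[].
Qed.

Lemma Wsum_ext N (A : {set T}) : (#|A| < N)%N ->
  \sum_(k < N) W k A = \sum_(k < #|A|.+1) W k A.
Proof.
move=> hN; rewrite (big_ord_widen _ (fun k => W k A) hN) [RHS]big_mkcond /=.
apply: eq_bigr => i _; case: ifP => // hi; rewrite W_big //.
by rewrite ltnNge -ltnS hi.
Qed.

Lemma sum_subsets (G : nat -> K) (A : {set T}) :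
  \sum_(C : {set T} | C \subset A) G #|C| =
  \sum_(c < #|A|.+1) 'C(#|A|, c)%:R * G c.
Proof.
rewrite (partition_big (fun C : {set T} => (inord #|C| : 'I_#|A|.+1)) predT) //=.
apply: eq_bigr => c _.
transitivity (\sum_(C in [set C : {set T} | C \subset A & #|C| == c]) G c).
  apply: eq_big => [C|C].
    rewrite inE; case hC: (C \subset A) => //=.
    by rewrite -val_eqE /= inordK // ltnS subset_leq_card.
  by case/andP => hC /eqP <-; rewrite inordK // ltnS subset_leq_card.
by rewrite sumr_const cards_draws mulr_natl.
Qed.

Variable g : nat -> K.
Hypothesis g0 : g 0 = 1.
Hypothesis gS : forall m, (0 < m)%N ->
  g m = - \sum_(i < m) 'C(m, i)%:R * f (m - i) i * g i.

Lemma Wt_g m (A : {set T}) : #|A| = m -> \sum_(k < m.+1) W k A = g m.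
Proof.
elim/ltn_ind: m A => -[|m] IH A hA.
  move/eqP: hA; rewrite cards_eq0 => /eqP ->.
  by rewrite big_ord_recl big_ord0 addr0 W0 eqxx g0.
rewrite big_ord_recl W0 -cards_eq0 hA /= add0r gS //.
under eq_bigr => k _ do rewrite /bump /= add1n W_S.
rewrite sumrN exchange_big /=; congr (- _).
under eq_bigr => C hC do rewrite -mulr_sumr.
have hc (C : {set T}) : C \subset A -> #|A :\: C| = (m.+1 - #|C|)%N.
  by move=> hCA; rewrite cardsD (setIidPr hCA) hA.
transitivity (\sum_(C : {set T} | (C \subset A) && (C != set0))
   f #|C| (m.+1 - #|C|) * g (m.+1 - #|C|)).
  apply: eq_bigr => C /andP [hCA hC0]; rewrite hc // Wsum_ext; last first.
    have h0 : (0 < #|C|)%N by rewrite card_gt0.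
    rewrite hc //; lia.
  have h0 : (0 < #|C|)%N by rewrite card_gt0.
  rewrite (IH #|A :\: C|) ?hc //; lia.
set G := fun c => if c != 0%N then f c (m.+1 - c) * g (m.+1 - c) else 0.
rewrite big_mkcondr /=.
transitivity (\sum_(C : {set T} | C \subset A) G #|C|).
  by apply: eq_bigr => C _; rewrite /G cards_eq0.
rewrite sum_subsets hA big_ord_recl /= {1}/G eqxx mulr0 add0r.
rewrite [RHS](reindex_inj rev_ord_inj) /=.
apply: eq_bigr => i _; rewrite /G /bump /= add1n.
have hi := ltn_ord i.
have e : (m.+1 - (m.+1 - i.+1) = i.+1)%N by lia.
by rewrite e bin_sub // mulrA.
Qed.

End Comb.

Theorem mainTheorem15 (K : fieldType) (hK : [pchar K] =i pred0)
  (d : {linear {poly K} -> {poly K}}) (hd : is_delta d)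
  (p : nat -> {poly K}) (hp : is_basic_seq d p)
  (z : nat -> K) (t : nat -> {poly K}) (ht : is_goncarov_basis d z t)
  (n : nat) (hn : (1 <= n)%N) :
  (t n).[0] =
    \sum_(k < n.+1)
      \sum_(B : {ffun 'I_k -> {set 'I_n}} | is_ordpart B)
        (-1) ^+ k * \prod_(i < k) (p #|B i|).[z (psum B i)].
Proof.
pose f := fun b s => (p b).[z s].
have -> : \sum_(k < n.+1)
      \sum_(B : {ffun 'I_k -> {set 'I_n}} | is_ordpart B)
        (-1) ^+ k * \prod_(i < k) (p #|B i|).[z (psum B i)] =
   \sum_(k < n.+1) W f k [set: 'I_n] by [].
rewrite (@Wt_g K _ f (fun i => (t i).[0])) //.
- exact: (@t0 K d z t ht).
- by move=> m hm; rewrite (@t_rec K hK d p hp z t ht m hm).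
- by rewrite cardsT card_ord.
Qed.
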